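(* Let $M(E,I)$ be a free partially commutative monoid and $\alpha\in M(E,I)$. Then the comma category $\mathfrak FM(E,I)/\alpha$ is a partially ordered set, i.e. between any two objects there is at most one morphism, and two objects with morphisms in both directions are equal.
   Context: $M(E,I)$ is the monoid generated by a set $E$ (possibly infinite) with relations $ab=ba$ for $(a,b)\in I$, $I\subseteq E\times E$ irreflexive and symmetric. For a monoid $M$, $\mathfrak FM$ has objects the elements of $M$ and morphisms $\beta\to\gamma$ the pairs $(f,g)$ with $g\beta f=\gamma$; composition $(f_2,g_2)\circ(f_1,g_1)=(f_1f_2,g_2g_1)$. The comma category $\mathfrak FM/\alpha$ has objects pairs $(\beta,\varphi)$ with $\varphi:\beta\to\alpha$ a morphism of $\mathfrak FM$, and morphisms $(\beta,\varphi)\to(\beta',\varphi')$ the morphisms $\psi:\beta\to\beta'$ with $\varphi'\circ\psi=\varphi$. *)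

(* Defs.v *)
From Stdlib Require Import List.
Import ListNotations.

(* Free partially commutative monoid M(E,I), modelled as words (list E)
   modulo the congruence generated by  ab = ba  for (a,b) in I. *)
Inductive tequiv {E : Type} (I : E -> E -> Prop) : list E -> list E -> Prop :=
| tequiv_refl  : forall u, tequiv I u u
| tequiv_sym   : forall u v, tequiv I u v -> tequiv I v u
| tequiv_trans : forall u v w, tequiv I u v -> tequiv I v w -> tequiv I u w
| tequiv_swap  : forall u v a b, I a b ->
    tequiv I (u ++ a :: b :: v) (u ++ b :: a :: v).

Definition indep_rel {E : Type} (I : E -> E -> Prop) : Prop :=
  (forall a, ~ I a a) /\ (forall a b, I a b -> I b a).

Definition FMhom {E : Type} (I : E -> E -> Prop)
  (beta gamma : list E) (f g : list E) : Prop :=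
  tequiv I (g ++ beta ++ f) gamma.

Definition FMcomp {E : Type} (fg2 fg1 : list E * list E) : list E * list E :=
  (fst fg1 ++ fst fg2, snd fg2 ++ snd fg1).

Definition FMhom_eq {E : Type} (I : E -> E -> Prop)
  (fg fg' : list E * list E) : Prop :=
  tequiv I (fst fg) (fst fg') /\ tequiv I (snd fg) (snd fg').

Definition comma_obj {E : Type} (I : E -> E -> Prop) (alpha : list E)
  (beta : list E) (phi : list E * list E) : Prop :=
  FMhom I beta alpha (fst phi) (snd phi).

Definition comma_hom {E : Type} (I : E -> E -> Prop)
  (beta : list E) (phi : list E * list E)
  (beta' : list E) (phi' : list E * list E)
  (psi : list E * list E) : Prop :=
  FMhom I beta beta' (fst psi) (snd psi) /\
  FMhom_eq I (FMcomp phi' psi) phi.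

Definition comma_obj_eq {E : Type} (I : E -> E -> Prop)
  (beta : list E) (phi : list E * list E)
  (beta' : list E) (phi' : list E * list E) : Prop :=
  tequiv I beta beta' /\ FMhom_eq I phi phi'.

(* Main.v *)
Require Import Defs.
From Stdlib Require Import List.
From Stdlib Require Import Lia ClassicalEpsilon.
Import ListNotations.

Section Aux.
Context {E : Type} (I : E -> E -> Prop).

Lemma tequiv_len u v : tequiv I u v -> length u = length v.
Proof.
  induction 1; auto; try congruence.
  rewrite !length_app; simpl; lia.
Qed.

Lemma tequiv_app_l w u v : tequiv I u v -> tequiv I (w ++ u) (w ++ v).
Proof.
  induction 1.
  - apply tequiv_refl.
  - now apply tequiv_sym.
  - eapply tequiv_trans; eauto.
  - rewrite !app_assoc. now apply tequiv_swap.
Qed.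

Fixpoint rem (a : E) (w : list E) : list E :=
  match w with
  | [] => []
  | x :: w' => if excluded_middle_informative (x = a) then w' else x :: rem a w'
  end.

Lemma rem_app_in a u w : In a u -> rem a (u ++ w) = rem a u ++ w.
Proof.
  induction u as [|x u IH]; simpl; [tauto|].
  intros H. destruct (excluded_middle_informative (x = a)); auto.
  simpl. rewrite IH; auto. destruct H; [congruence|auto].
Qed.

Lemma rem_app_notin a u w : ~ In a u -> rem a (u ++ w) = u ++ rem a w.
Proof.
  induction u as [|x u IH]; simpl; auto.
  intros H. destruct (excluded_middle_informative (x = a)); [tauto|].
  rewrite IH; auto.
Qed.

Lemma tequiv_rem a u v : tequiv I u v -> tequiv I (rem a u) (rem a v).
Proof.
  induction 1.
  - apply tequiv_refl.
  - now apply tequiv_sym.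
  - eapply tequiv_trans; eauto.
  - destruct (classic (In a u)) as [Hin|Hn].
    + rewrite !rem_app_in by auto. now apply tequiv_swap.
    + rewrite !rem_app_notin by auto. apply tequiv_app_l.
      simpl. repeat (destruct excluded_middle_informative; simpl);
      subst; try congruence; try apply tequiv_refl;
      apply (tequiv_swap I [] _ _ _ H).
Qed.

Lemma cancel_l w u v : tequiv I (w ++ u) (w ++ v) -> tequiv I u v.
Proof.
  induction w as [|a w IH]; simpl; auto.
  intros H. apply IH. apply (tequiv_rem a) in H. simpl in H.
  destruct (excluded_middle_informative (a = a)); [exact H|congruence].
Qed.

Lemma tequiv_rev u v : tequiv I u v -> tequiv I (rev u) (rev v).
Proof.
  induction 1.
  - apply tequiv_refl.
  - now apply tequiv_sym.
  - eapply tequiv_trans; eauto.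
  - rewrite !rev_app_distr. simpl. rewrite <- !app_assoc. simpl.
    apply tequiv_sym. apply tequiv_swap; auto.
Qed.

Lemma cancel_r w u v : tequiv I (u ++ w) (v ++ w) -> tequiv I u v.
Proof.
  intros H. apply tequiv_rev in H. rewrite !rev_app_distr in H.
  apply cancel_l in H. apply tequiv_rev in H. now rewrite !rev_involutive in H.
Qed.
End Aux.

Theorem mainTheorem13 (E : Type) (I : E -> E -> Prop) (HI : indep_rel I)
  (alpha : list E)
  (beta : list E) (phi : list E * list E)
  (beta' : list E) (phi' : list E * list E) :
  comma_obj I alpha beta phi ->
  comma_obj I alpha beta' phi' ->
  (forall psi1 psi2 : list E * list E,
      comma_hom I beta phi beta' phi' psi1 ->
      comma_hom I beta phi beta' phi' psi2 ->
      FMhom_eq I psi1 psi2) /\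
  (forall psi chi : list E * list E,
      comma_hom I beta phi beta' phi' psi ->
      comma_hom I beta' phi' beta phi chi ->
      comma_obj_eq I beta phi beta' phi').
Proof.
  intros _ _. split.
  - intros [f1 g1] [f2 g2] [_ [H1 H2]] [_ [H3 H4]]; simpl in *.
    split; simpl.
    + apply (cancel_r I (fst phi')). eapply tequiv_trans; [exact H1|].
      now apply tequiv_sym.
    + apply (cancel_l I (snd phi')). eapply tequiv_trans; [exact H2|].
      now apply tequiv_sym.
  - intros [f1 g1] [f2 g2] [Hp [H1 H2]] [Hc _]; unfold FMhom in *; simpl in *.
    pose proof (tequiv_len I _ _ Hp) as L1.
    pose proof (tequiv_len I _ _ Hc) as L2.
    rewrite !length_app in L1, L2.
    assert (length f1 = 0) as F by lia. assert (length g1 = 0) as G by lia.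
    apply length_zero_iff_nil in F, G. subst f1 g1.
    simpl in *. rewrite app_nil_r in Hp, H2.
    split; [exact Hp|]. split; now apply tequiv_sym.
Qed.
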